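(* Let $\mathcal X$ be a Palais–Smale GKM variety, with its moment graph directed as in the Palais–Smale condition. If $p^v=(p^v_w)_{w\in\mathcal X^T}$ and $q^v=(q^v_w)_{w\in\mathcal X^T}$ are two Knutson–Tao classes corresponding to the same fixed point $v$, then $p^v_w=q^v_w$ for every $w\in\mathcal X^T$.
   Context: Let $T=(\mathbb{C}^* )^n$ and let $\mathcal X$ be a complex projective algebraic variety with an algebraic $T$-action having finitely many fixed points and finitely many one-dimensional orbits, and which is equivariantly formal (a GKM variety). The moment graph has vertex set $\mathcal X^T$ and an edge for each one-dimensional orbit, joining the two fixed points in its closure. When directed, each edge $v\to w$ is labeled $\alpha_{vw}$, the $T$-weight (a linear form in $t_1,\ldots,t_n$) on the tangent line at $v$ of the corresponding orbit closure. Assume that the labels on the edges directed out of any vertex are pairwise linearly independent. $\mathcal X$ is Palais–Smale if the moment graph can be directed so that there is an edge $v\to u$ only if $v$ has more outgoing edges than $u$. By the GKM theorem, $H^*_T(\mathcal X)$ is the ring of tuples $(p_w)_{w\in\mathcal X^T}$ of polynomials in $\mathbb{C}[t_1,\ldots,t_n]$ with $p_{N}-p_{S}\in\langle\alpha\rangle$ for every edge with endpoints $N,S$ and weight $\pm\alpha$. Write $u\succeq_D u'$ if there is a directed path (possibly of length $0$) from $u$ to $u'$. A Knutson–Tao class for $v$ is a class $(p^v_w)_w\in H^*_T(\mathcal X)$ with: (1) $p^v_v=\prod_{v\to w}\alpha_{vw}$, the product over the edges out of $v$; (2) each nonzero $p^v_w$ is homogeneous of degree $\deg p^v_v$; (3)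 $p^v_w=0$ whenever $w\not\succ_D v$. *)

(* Defs.v *)
From HB Require Import structures.
From mathcomp Require Import all_boot all_order all_algebra.
From mathcomp Require Import mpoly.
From mathcomp Require Import Rstruct.
From mathcomp Require Import complex.
From Stdlib Require Reals.

Set Implicit Arguments.
Unset Strict Implicit.
Unset Printing Implicit Defensive.

Import Order.TTheory GRing.Theory Num.Theory.
Local Open Scope ring_scope.

Definition CC : Type := complex Rdefinitions.R.

(* H^*_T(pt) = C[t_1, ..., t_n]. *)
Definition Tpoly (n : nat) := {mpoly CC[n]}.

(* Moment graph data: finite vertex set V (the fixed points X^T), finite edge
   set E (one-dimensional orbits), each edge directed src e -> tgt e (the
   Palais-Smale orientation) and labelled alpha e = alpha_{src e, tgt e}, the
   T-weight at src e on the tangent line of the orbit closure. *)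

Definition outdeg (V E : finType) (src : E -> V) (v : V) : nat :=
  #|[set e | src e == v]|.

Definition palais_smale (V E : finType) (src tgt : E -> V) : Prop :=
  forall e : E, (outdeg src (tgt e) < outdeg src (src e))%N.

Definition weight_labels (n : nat) (E : finType) (alpha : E -> Tpoly n) : Prop :=
  forall e : E, alpha e != 0 /\ alpha e \is 1.-homog.

Definition pairwise_indep_out (n : nat) (V E : finType) (src : E -> V)
  (alpha : E -> Tpoly n) : Prop :=
  forall e e' : E, e != e' -> src e = src e' ->
    forall a b : CC, a *: alpha e + b *: alpha e' = 0 -> a = 0 /\ b = 0.

(* GKM description of H^*_T(X): tuples (p_w)_w with p_N - p_S in <alpha>
   for every edge with endpoints N, S and weight +-alpha. *)
Definition is_gkm_class (n : nat) (V E : finType) (src tgt : E -> V)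
  (alpha : E -> Tpoly n) (p : V -> Tpoly n) : Prop :=
  forall e : E, exists c : Tpoly n, p (src e) - p (tgt e) = c * alpha e.

Definition dedge (V E : finType) (src tgt : E -> V) : rel V :=
  fun x y => [exists e : E, (src e == x) && (tgt e == y)].

Definition dreach (V E : finType) (src tgt : E -> V) (u u' : V) : bool :=
  connect (dedge src tgt) u u'.

Definition tdeg (n : nat) (p : Tpoly n) : nat := (msize p).-1.

Definition knutson_tao_class (n : nat) (V E : finType) (src tgt : E -> V)
  (alpha : E -> Tpoly n) (v : V) (p : V -> Tpoly n) : Prop :=
  [/\ is_gkm_class src tgt alpha p,
      p v = \prod_(e | src e == v) alpha e,
      (forall w : V, p w != 0 -> p w \is (tdeg (p v)).-homog) &
      (forall w : V, ~~ dreach src tgt w v -> p w = 0)].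

(* Main.v *)
Require Import Defs.
From HB Require Import structures.
From mathcomp Require Import all_boot all_order all_algebra.
From mathcomp Require Import mpoly.
From mathcomp Require Import ring complex Rstruct.
Set Implicit Arguments.
Unset Strict Implicit.
Unset Printing Implicit Defensive.
Import Order.TTheory GRing.Theory Num.Theory.
Local Open Scope ring_scope.

Section Alg.
Variable n : nat.
Local Notation P := (Tpoly n).

Definition dv (l x : P) := exists c : P, x = c * l.

Lemma dv0 l : dv l 0. Proof. by exists 0; rewrite mul0r. Qed.
Lemma dvD l x y : dv l x -> dv l y -> dv l (x + y).
Proof. by move=> [a ->] [b ->]; exists (a + b); rewrite mulrDl. Qed.
Lemma dvN l x : dv l x -> dv l (- x).
Proof. by move=> [a ->]; exists (- a); rewrite mulNr. Qed.
Lemma dvMl l x y : dv l y -> dv l (x * y).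
Proof. by move=> [a ->]; exists (x * a); rewrite mulrA. Qed.
Lemma dvZ l c x : dv l x -> dv l (c *: x).
Proof. by move=> [a ->]; exists (c *: a); rewrite scalerAl. Qed.

Lemma cong_mul (l a b c d : P) : dv l (a - b) -> dv l (c - d) -> dv l (a * c - b * d).
Proof.
move=> h1 h2.
have -> : a * c - b * d = c * (a - b) + b * (c - d).
  by ring.
by apply: dvD; apply: dvMl.
Qed.

Lemma cong_exp l a b k : dv l (a - b) -> dv l (a ^+ k - b ^+ k).
Proof.
move=> h; elim: k => [|k ih]; first by rewrite !expr0 subrr; apply: dv0.
by rewrite !exprS; apply: cong_mul.
Qed.

Lemma cong_prod l (F G : 'I_n -> P) :
  (forall i, dv l (F i - G i)) -> dv l (\prod_i F i - \prod_i G i).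
Proof.
move=> h; apply: (big_rec2 (fun x y => dv l (x - y))).
  by rewrite subrr; apply: dv0.
by move=> i x y _ hxy; apply: cong_mul.
Qed.

Lemma cong_comp l (s : n.-tuple P) :
  (forall i, dv l (tnth s i - 'X_i)) -> forall p : P, dv l (p - (p \mPo s)).
Proof.
move=> hs p.
rewrite comp_mpolyEX {1}(mpolyE p) -sumrB.
apply: (big_rec (fun x => dv l x)); first exact: dv0.
move=> m x _ hx; apply: dvD => //.
rewrite -scalerBr; apply: dvZ.
rewrite comp_mpolyX mpolyXE_id; apply: cong_prod => i.
apply: cong_exp; have := dvN (hs i); by rewrite opprB.
Qed.

Lemma msize_homog (p : P) d : p != 0 -> p \is d.-homog -> msize p = d.+1.
Proof.
move=> nz hd.
have := dhomog_uniq nz hd (dhomog_msize hd) => ->.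
rewrite prednK // lt0n.
by rewrite msize_poly_eq0.
Qed.

Lemma lin_repr (l : P) : l \is 1.-homog ->
  forall m, m \in msupp l -> exists i, m = U_(i)%MM.
Proof.
move=> /dhomogP h m /h /eqP /mdeg1P [i /eqP ->]; by exists i.
Qed.

Lemma lin_prime (l g h : P) : l != 0 -> l \is 1.-homog ->
  dv l (g * h) -> dv l g \/ dv l h.
Proof.
move=> nz hl [c hc].
have [m0 m0s] : exists m, m \in msupp l.
  case E: (msupp l) => [|m s]; last by exists m; rewrite mem_head.
  by move: nz; rewrite -msupp_eq0 E.
have [j ej] := lin_repr hl m0s; subst m0.
set a := l@_U_(j)%MM.
have anz : a != 0 by rewrite -mcoeff_msupp.
pose s := [tuple 'X_i - (if i == j then a^-1 *: l else 0) | i < n].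
have hs : forall i, dv l (tnth s i - 'X_i).
  move=> i; rewrite tnth_mktuple addrAC subrr add0r; apply: dvN.
  case: (i == j); last exact: dv0.
  by exists (a^-1)%:MP; rewrite mul_mpolyC.
have phil : l \mPo s = 0.
  rewrite comp_mpolyEX.
  have -> : \sum_(m <- msupp l) l@_m *: ('X_[m] \mPo s) =
    \sum_(m <- msupp l) (l@_m *: 'X_[m] - (l@_m * (m == U_(j)%MM)%:R / a) *: l).
    rewrite big_seq [RHS]big_seq; apply: eq_bigr => m ms.
    have [i ->] := lin_repr hl ms.
    rewrite comp_mpolyXU -tnth_nth tnth_mktuple scalerBr eq_mnm1.
    case: (i == j); first by rewrite mulr1 scalerA.
    by rewrite mulr0 mul0r scale0r scaler0.
  rewrite sumrB -mpolyE -scaler_suml.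
  rewrite -big_distrl /=.
  have -> : \sum_(m <- msupp l) l@_m * (m == U_(j)%MM)%:R = a.
    rewrite (bigD1_seq (U_(j)%MM)) ?msupp_uniq //= eqxx mulr1 big1 ?addr0 //.
    by move=> m /negbTE ->; rewrite mulr0.
  by rewrite divff // scale1r subrr.
have key : (g \mPo s) * (h \mPo s) = 0.
  by rewrite -rmorphM /= hc rmorphM /= phil mulr0.
move/eqP: key; rewrite mulf_eq0 => /orP [] /eqP H; [left|right].
  by have := cong_comp hs g; rewrite H subr0.
by have := cong_comp hs h; rewrite H subr0.
Qed.

End Alg.
Section G.
Variables (n : nat) (V E : finType) (src tgt : E -> V) (alpha : E -> Tpoly n).
Hypothesis Hw : weight_labels alpha.
Hypothesis Hind : pairwise_indep_out src alpha.

Lemma msize_lin e : msize (alpha e) = 2%N.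
Proof. by have [nz h] := Hw e; rewrite (msize_homog nz h). Qed.

Lemma not_dv_indep e e' : e != e' -> src e = src e' -> ~ dv (alpha e) (alpha e').
Proof.
move=> ne se [c hc].
have [nz _] := Hw e; have [nz' _] := Hw e'.
have cnz : c != 0 by apply: contraNneq nz' => c0; rewrite hc c0 mul0r.
have := msizeM cnz nz; rewrite -hc !msize_lin => /eqP.
rewrite addn2 /= eqSS => /eqP /esym h1.
have := msize1_polyC (eq_leq h1) => ec.
rewrite ec mul_mpolyC in hc.
have := Hind ne se (a := - c@_0) (b := 1).
rewrite scaleNr scale1r -hc addNr => /(_ erefl) [_].
by apply/eqP; apply: oner_neq0.
Qed.

Lemma dv_prod_elim e x (S : seq E) :
  (forall e', e' \in S -> ~ dv (alpha e) (alpha e')) ->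
  dv (alpha e) (x * \prod_(e' <- S) alpha e') -> dv (alpha e) x.
Proof.
have [nz hl] := Hw e.
elim: S x => [|a S ih] x hS; first by rewrite big_nil mulr1.
rewrite big_cons mulrA => h.
have := ih (x * alpha a) (fun e' he' => hS e' (mem_behead (s := a :: S) he')) h.
case/(lin_prime nz hl) => [|h'] //; exfalso; exact: (hS a (mem_head _ _) h').
Qed.

Lemma dv_prod w (S : seq E) f : uniq S -> (forall e, e \in S -> src e = w) ->
  (forall e, e \in S -> dv (alpha e) f) -> dv (\prod_(e <- S) alpha e) f.
Proof.
elim: S f => [|a S ih] f /=.
  by move=> _ _ _; exists f; rewrite big_nil mulr1.
move=> /andP[aS uS] hsrc hdv.
have [c hc] := ih f uS (fun e he => hsrc e (mem_behead (s := a :: S) he))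
   (fun e he => hdv e (mem_behead (s := a :: S) he)).
have := hdv a (mem_head _ _); rewrite hc => /dv_prod_elim.
case.
  move=> e' he'; apply: not_dv_indep.
    by apply: contraNneq aS => ->.
  by rewrite (hsrc a (mem_head _ _)) (hsrc e' (mem_behead (s := a :: S) he')).
move=> c' hc'; exists c'; by rewrite big_cons hc' mulrA [c' * _]mulrC -mulrA mulrA.
Qed.

Lemma prod_homog (S : seq E) :
  \prod_(e <- S) alpha e != 0 /\ \prod_(e <- S) alpha e \is (size S).-homog.
Proof.
elim: S => [|a S [ih1 ih2]]; first by rewrite big_nil oner_eq0 dhomog1.
have [nz h] := Hw a.
rewrite big_cons mulf_neq0 //; split => //.
by have := dhomogM h ih2.
Qed.

Lemma deg_bound w (S : seq E) (f : Tpoly n) d : uniq S -> (forall e, e \in S -> src e = w) ->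
  (forall e, e \in S -> dv (alpha e) f) -> f != 0 -> f \is d.-homog -> (size S <= d)%N.
Proof.
move=> uS hs hd fnz fh.
have [c hc] := dv_prod uS hs hd.
have [pnz ph] := prod_homog S.
have cnz : c != 0 by apply: contraNneq fnz => c0; rewrite hc c0 mul0r.
have := msizeM cnz pnz; rewrite -hc (msize_homog fnz fh) (msize_homog pnz ph).
have : (0 < msize c)%N by rewrite lt0n msize_poly_eq0.
case: (msize c) => // k _ /=.
rewrite addnS => [[->]]; exact: leq_addl.
Qed.

Definition Sout w := [seq e <- index_enum E | src e == w].

Lemma Sout_uniq w : uniq (Sout w).
Proof. by rewrite filter_uniq // index_enum_uniq. Qed.

Lemma Sout_src w e : e \in Sout w -> src e = w.
Proof. by rewrite mem_filter => /andP[/eqP]. Qed.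

Lemma Sout_mem w e : src e = w -> e \in Sout w.
Proof. by move=> h; rewrite mem_filter h eqxx /= mem_index_enum. Qed.

Lemma Sout_size w : size (Sout w) = outdeg src w.
Proof.
rewrite /outdeg cardsE cardE /Sout.
by rewrite deprecated_filter_index_enum.
Qed.

Lemma prod_Sout w : \prod_(e | src e == w) alpha e = \prod_(e <- Sout w) alpha e.
Proof. by rewrite big_filter. Qed.

End G.

Section Graph.
Variables (V E : finType) (src tgt : E -> V).
Hypothesis Hps : palais_smale src tgt.

Lemma reach_le u v : dreach src tgt u v -> (outdeg src v <= outdeg src u)%N.
Proof.
move/connectP=> [s]; elim: s u => [|y s ih] u /=; first by move=> _ ->.
move=> /andP[/existsP[e /andP[/eqP se /eqP te]] ps] lv.
apply: leq_trans (ih y ps lv) _.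
by have := Hps e; rewrite se te => /ltnW.
Qed.

Lemma step w v : dreach src tgt w v -> w != v ->
  exists e, src e = w /\ dreach src tgt (tgt e) v.
Proof.
move/connectP=> [[|y s]] /=; first by move=> _ ->; rewrite eqxx.
move=> /andP[/existsP[e /andP[/eqP se /eqP te]] ps] lv _.
exists e; split => //; apply/connectP; exists s => //; by rewrite te.
Qed.
End Graph.

Theorem mainTheorem4 (n : nat) (V E : finType) (src tgt : E -> V)
    (alpha : E -> Tpoly n)
    (Hw : weight_labels alpha)
    (Hind : pairwise_indep_out src alpha)
    (Hps : palais_smale src tgt)
    (v : V) (p q : V -> Tpoly n)
    (Hp : knutson_tao_class src tgt alpha v p)
    (Hq : knutson_tao_class src tgt alpha v q) :
  forall w : V, p w = q w.
Proof.
case: Hp => Hgp Hpv Hhp Hzp; case: Hq => Hgq Hqv Hhq Hzq.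
have Hpqv : p v = q v by rewrite Hpv Hqv.
have Hd : tdeg (p v) = outdeg src v.
  rewrite /tdeg Hpv prod_Sout.
  have [nz h] := prod_homog Hw (Sout src v).
  by rewrite (msize_homog nz h) /= Sout_size.
suff H : forall k w, (outdeg src w < k)%N -> p w = q w.
  by move=> w; apply: (H (outdeg src w).+1).
elim=> [//|k ih] w hw.
case: (boolP (dreach src tgt w v)) => hr; last by rewrite Hzp ?Hzq.
case: (eqVneq w v) => [->//|hne].
apply/eqP; rewrite -subr_eq0; apply/negP => hnz.
have hdiv : forall e, e \in Sout src w -> dv (alpha e) (p w - q w).
  move=> e /Sout_src se.
  have Ht : p (tgt e) = q (tgt e).
    apply: ih; have := Hps e; rewrite se => h; exact: leq_trans h hw.
  have [c1 h1] := Hgp e; have [c2 h2] := Hgq e.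
  exists (c1 - c2); rewrite mulrBl -h1 -h2 Ht se.
  by ring.
have hh : p w - q w \is (outdeg src v).-homog.
  rewrite -Hd; apply: rpredB.
    by case: (eqVneq (p w) 0) => [->|/Hhp //]; apply: rpred0.
  by case: (eqVneq (q w) 0) => [->|/Hhq]; [apply: rpred0 | rewrite Hpqv].
have := deg_bound Hw Hind (Sout_uniq src w) (@Sout_src _ _ src w) hdiv (introN idP hnz) hh.
rewrite Sout_size.
have [e [se re]] := step hr hne.
have := reach_le Hps re; have := Hps e; rewrite se => h1 h2 h3.
have := leq_ltn_trans h2 h1; rewrite ltnNge h3.
by [].
Qed.
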